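(* Let $c=q_1^{a_1}\cdots q_\omega^{a_\omega}$ with $q_1,\dots,q_\omega$ distinct primes and $a_i\ge1$. If $a_i\ge 2$ for some $i$, then $E_c(q_i)=\frac{\varphi(c)}{q_i}$.
   Context: $\varphi$ is Euler's totient function. For a positive integer $c$ with distinct prime factors $q_1,\dots,q_\omega$ and real $x\ne 0$, $$E_c(x)=\sum_{S\subseteq\{1,\dots,\omega\}}(-1)^{|S|}\left\lfloor \frac{c}{x\prod_{j\in S}q_j}\right\rfloor.$$ *)

(* Defs.v *)
From HB Require Import structures.
From mathcomp Require Import all_boot all_order all_algebra.
Set Implicit Arguments. Unset Strict Implicit. Unset Printing Implicit Defensive.
Import Order.TTheory GRing.Theory Num.Theory.
Local Open Scope ring_scope.

Definition E (c : nat) (x : rat) : int :=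
  \sum_(S : {set 'I_(size (primes c))})
     (-1) ^+ #|S| *
     Num.floor ((c%:Q) / (x * \prod_(j in S) ((nth 0%N (primes c) j)%:Q))).

(* Main.v *)
Require Import Defs.
From HB Require Import structures.
From mathcomp Require Import all_boot all_order all_algebra.
From mathcomp Require Import ring.
Import Order.TTheory GRing.Theory Num.Theory.
Local Open Scope ring_scope.

Lemma prod_dvd_seq (s : seq nat) (F G : nat -> nat) :
  (forall x, x \in s -> F x %| G x)%N ->
  (\prod_(x <- s) F x %| \prod_(x <- s) G x)%N.
Proof.
elim: s => [|a s IH] H; first by rewrite !big_nil.
rewrite !big_cons dvdn_mul //; first by apply: H; rewrite mem_head.
by apply: IH => x xs; apply: H; rewrite in_cons xs orbT.
Qed.

Lemma c_decomp (c : nat) : (0 < c)%N ->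
  c = (\prod_(p <- primes c) p ^ logn p c)%N.
Proof.
move=> c0; rewrite {1}(prod_prime_decomp c0) prime_decompE big_map.
by apply: eq_bigr.
Qed.

Lemma qP_dvd (c q : nat) :
  (0 < c)%N -> q \in primes c -> (2 <= logn q c)%N ->
  (q * \prod_(p <- primes c) p %| c)%N.
Proof.
move=> c0 qc lq.
rewrite {2}(@c_decomp c c0) (big_rem q qc) [X in (_ %| X)%N](big_rem q qc) /=.
rewrite mulnA mulnn dvdn_mul //; first by rewrite dvdn_exp2l.
apply: prod_dvd_seq => x /mem_rem xs.
have : (0 < logn x c)%N by rewrite logn_gt0.
by case: (logn x c) => // e _; rewrite expnS dvdn_mulr.
Qed.

Theorem lemma3 (c q : nat) :
  (0 < c)%N -> q \in primes c -> (2 <= logn q c)%N ->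
  ((E c q%:Q)%:~R : rat) = (totient c)%:Q / q%:Q.
Proof.
move=> c0 qc lq.
set n := size (primes c).
set p := fun j : 'I_n => nth 0%N (primes c) j.
have pprime : forall j : 'I_n, prime (p j).
  move=> j; have : p j \in primes c by rewrite mem_nth.
  by rewrite mem_primes => /andP[].
have qprime : prime q by move: qc; rewrite mem_primes => /andP[].
have hq0 : q%:Q != 0 by rewrite pnatr_eq0 -lt0n prime_gt0.
have Pall : (\prod_(j < n) p j = \prod_(x <- primes c) x)%N.
  by rewrite (big_nth 0%N) big_mkord.
have hdiv : forall S : {set 'I_n}, (q * \prod_(j in S) p j %| c)%N.
  move=> S; apply: (dvdn_trans _ (@qP_dvd c q c0 qc lq)).
  rewrite dvdn_pmul2l ?prime_gt0 // -Pall [X in (_ %| X)%N](bigID (mem S)) /=.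
  by apply: dvdn_mulr.
have term : forall S : {set 'I_n},
   (((-1) ^+ #|S| * Num.floor ((c%:Q) / (q%:Q * \prod_(j in S) ((p j)%:Q))))%:~R : rat)
   = c%:Q / q%:Q * \prod_(j in S) (- (p j)%:Q^-1).
  move=> S.
  set d := (q * \prod_(j in S) p j)%N.
  have d0 : (0 < d)%N.
    rewrite muln_gt0 prime_gt0 //=; apply: prodn_gt0 => j; exact: prime_gt0.
  have e1 : c%:Q / (q%:Q * \prod_(j in S) (p j)%:Q) = (c %/ d)%:R.
    change (c%:R / (q%:R * \prod_(j in S) (p j)%:R) = (c %/ d)%:R :> rat).
    rewrite -natr_prod -natrM -/d.
    rewrite -{1}(divnK (hdiv S)) -/d natrM mulfK // pnatr_eq0 -lt0n //.
  rewrite e1 pmulrn intrKfloor rmorphM /= rmorphXn rmorphN1 /=.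
  have e2 : ((c %/ d)%:Z)%:~R = (c %/ d)%:R :> rat by [].
  rewrite e2 -e1 prodrN prodfV.
  rewrite invfM; ring.
rewrite /E /= -/n.
rewrite rmorph_sum /=.
under eq_bigr => S _ do rewrite term.
rewrite -mulr_sumr.
have dist : \sum_(S : {set 'I_n}) \prod_(j in S) (- (p j)%:Q^-1)
          = \prod_(x <- primes c) (1 - x%:Q^-1).
  transitivity (\prod_(j < n) (- (p j)%:Q^-1 + 1)); last first.
    by rewrite (big_nth 0%N) big_mkord; apply: eq_bigr => j _; rewrite addrC.
  rewrite (@bigA_distr rat 0 1 *%R +%R _ (fun j => - (p j)%:Q^-1) (fun _ => 1)).
  apply: eq_big => // S _.
  by rewrite big_mkcond.
have tot : (totient c)%:Q = c%:Q * \prod_(x <- primes c) (1 - x%:Q^-1).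
  change ((totient c)%:R = c%:R * \prod_(x <- primes c) (1 - x%:R^-1) :> rat).
  rewrite (totientE c0) [X in X%:R * _](@c_decomp c c0) !natr_prod -big_split /=.
  rewrite big_seq [RHS]big_seq; apply: eq_bigr => x xs.
  have xpr : prime x by move: xs; rewrite mem_primes => /andP[].
  have : (0 < logn x c)%N by rewrite logn_gt0.
  case: (logn x c) => [|k] // _.
  have : (0 < x)%N by exact: prime_gt0.
  case: x {xs xpr} => [|y] // _.
  rewrite /= natrM !natrX exprS -[y.+1]addn1 natrD.
  have hy : (y%:R + 1 : rat) != 0 by rewrite -[1]/(1%N%:R) -natrD pnatr_eq0 addn1.
  field; exact: hy.
rewrite dist tot; field; exact: hq0.
Qed.
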